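(* Let $V$ be a finite-dimensional vector space over $\mathbb{F}_q$, $\mathcal{F}$ a projective point family in $V$ of size $\nu$, $\varphi:\mathbb{F}_q^\nu\to V$ a parent function of $\mathcal{F}$ with parent code $P=\ker\varphi$, and $r=\lfloor (d_H(P)-1)/2\rfloor$. Let $x\in\mathbb{F}_q^\nu$. Then for every integer $t\le r$, $\varphi$ restricts to a bijection from the Hamming sphere $S^H_t(x)=\{y:d_H(x,y)=t\}\subseteq\mathbb{F}_q^\nu$ onto the sphere $S^{\mathcal{F}}_t(\varphi(x))=\{\varphi(x)+v: v\in V,\ \operatorname{wt}_{\mathcal{F}}(v)=t\}\subseteq V$.
   Context: A projective point family is a set of pairwise linearly independent nonzero vectors; $\operatorname{wt}_{\mathcal{F}}(v)=\min(\{|I|:I\subseteq\mathcal{F},v\in\langle I\rangle\}\cup\{\infty\})$. A parent function of $\mathcal{F}$ is a linear map $\varphi:\mathbb{F}_q^\nu\to V$ with $\{\langle\varphi(e_i)\rangle\}_{i=1}^\nu=\{\langle f\rangle: f\in\mathcal{F}\}$. $d_H(P)$ is the minimum Hamming distance between distinct elements of $P$. *)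

(* Defs.v *)
From HB Require Import structures.
From mathcomp Require Import all_boot all_order all_algebra all_field.
Set Implicit Arguments. Unset Strict Implicit. Unset Printing Implicit Defensive.
Import GRing.Theory.
Local Open Scope ring_scope.

Section Defs.
Variable F : finFieldType.

Definition proj_point_family (V : vectType F) (fam : seq V) : Prop :=
  uniq fam /\ (forall f, f \in fam -> f != 0) /\
  (forall f g, f \in fam -> g \in fam -> f != g -> free [:: f; g]).

Definition wtF_eq (V : vectType F) (fam : seq V) (v : V) (t : nat) : Prop :=
  (exists I : seq V, [/\ {subset I <= fam}, uniq I, size I = t & v \in <<I>>%VS])
  /\ (forall I : seq V, {subset I <= fam} -> uniq I -> v \in <<I>>%VS ->
        (t <= size I)%N).

Definition e_ (nu : nat) (i : 'I_nu) : 'rV[F]_nu := delta_mx 0 i.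

Definition parent_function (V : vectType F) (nu : nat) (fam : seq V)
  (phi : {linear 'rV[F]_nu -> V}) : Prop :=
  (forall i : 'I_nu, exists2 f, f \in fam & <[phi (e_ i)]>%VS = <[f]>%VS) /\
  (forall f, f \in fam -> exists i : 'I_nu, <[phi (e_ i)]>%VS = <[f]>%VS).

Definition dH (nu : nat) (x y : 'rV[F]_nu) : nat := #|[set i | x 0 i != y 0 i]|.

(* minimum distance of a code; None encodes +infinity (fewer than two codewords) *)
Definition min_dist (nu : nat) (P : {set 'rV[F]_nu}) : option nat :=
  let D := [seq dH xy.1 xy.2 | xy <- [seq (x, y) | x <- enum P, y <- enum P] & xy.1 != xy.2] in
  if D is d :: _ then Some (foldr minn d D) else None.

Definition packing_radius (nu : nat) (P : {set 'rV[F]_nu}) : option nat :=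
  omap (fun d => (d.-1)./2) (min_dist P).

Definition le_ext (t : nat) (r : option nat) : Prop :=
  if r is Some r' then (t <= r')%N else True.

Definition ker_set (V : vectType F) (nu : nat) (phi : {linear 'rV[F]_nu -> V})
  : {set 'rV[F]_nu} := [set x | phi x == 0].

Definition hamming_sphere (nu : nat) (t : nat) (x : 'rV[F]_nu) : {set 'rV[F]_nu} :=
  [set y | dH x y == t].

Definition in_F_sphere (V : vectType F) (fam : seq V) (t : nat) (w u : V) : Prop :=
  exists2 v : V, wtF_eq fam v t & u = w + v.
End Defs.

(* Main.v *)
Require Import Defs.
From HB Require Import structures.
From mathcomp Require Import all_boot all_order all_algebra all_field.
From mathcomp Require Import zify.
Import GRing.Theory.
Local Open Scope ring_scope.
Set Implicit Arguments. Unset Strict Implicit.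

Definition supp (F : finFieldType) nu (z : 'rV[F]_nu) := [set i | z 0 i != 0].
Definition wt (F : finFieldType) nu (z : 'rV[F]_nu) := #|supp z|.

Lemma wtD (F : finFieldType) nu (a b : 'rV[F]_nu) : (wt (a + b) <= wt a + wt b)%N.
Proof.
rewrite /wt; apply: leq_trans (_ : #|supp a :|: supp b| <= _)%N.
  apply: subset_leq_card; apply/subsetP => i; rewrite !inE mxE.
  by apply: contraLR; rewrite negb_or !negbK => /andP[/eqP-> /eqP->]; rewrite addr0.
by rewrite cardsU leq_subr.
Qed.

Lemma wtN (F : finFieldType) nu (a : 'rV[F]_nu) : wt (- a) = wt a.
Proof. by apply: eq_card => i; rewrite !inE !mxE oppr_eq0. Qed.

Lemma dH_wt (F : finFieldType) nu (x y : 'rV[F]_nu) : dH x y = wt (y - x).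
Proof. by apply: eq_card => i; rewrite !inE !mxE subr_eq0 eq_sym. Qed.

Lemma wt0 (F : finFieldType) nu (z : 'rV[F]_nu) : z != 0 -> (0 < wt z)%N.
Proof.
move=> nz; rewrite lt0n cards_eq0; apply: contra nz => /eqP H.
apply/eqP/rowP => i; rewrite mxE; apply/eqP; apply: contraT => Hi.
have : i \in supp z by rewrite inE.
by rewrite H inE.
Qed.

Lemma phi_sum (F : finFieldType) (V : vectType F) nu (phi : {linear 'rV[F]_nu -> V}) z :
  phi z = \sum_(i < nu) z 0 i *: phi (e_ F i).
Proof.
rewrite {1}(row_sum_delta z) raddf_sum; apply: eq_bigr => i _.
by change (phi (z 0 i *: e_ F i) = z 0 i *: phi (e_ F i)); rewrite linearZ.
Qed.

Lemma foldr_minn_le d s y : y \in s -> (foldr minn d s <= y)%N.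
Proof.
elim: s => // a s IH; rewrite in_cons => /orP[/eqP->|Hy] /=.
  exact: geq_minl.
exact: leq_trans (geq_minr _ _) (IH Hy).
Qed.

Lemma ker_big (F : finFieldType) (V : vectType F) nu (phi : {linear 'rV[F]_nu -> V}) t w :
  le_ext t (packing_radius (ker_set phi)) -> phi w = 0 -> w != 0 -> (t.*2 < wt w)%N.
Proof.
move=> Hle Hw nz.
have Hpos := wt0 nz.
move: Hle; rewrite /packing_radius /min_dist.
set D := [seq _ | _ <- _ & _].
have HD : dH w 0 \in D.
  rewrite /D; apply/mapP; exists (w, 0) => //.
  rewrite mem_filter /= nz /=.
  by apply/allpairsP; exists (w, 0); rewrite !mem_enum !inE /= Hw linear0 eqxx.
move: HD; case: D => [//|d D'] HD /=.
have Hd : (foldr minn d (d :: D') <= wt w)%N.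
  by have := foldr_minn_le d HD; rewrite dH_wt sub0r wtN.
move: Hd; set m := foldr minn d _ => Hd Ht.
have h1 : (((m.-1)./2).*2 <= m.-1)%N.
  by have := odd_double_half m.-1; lia.
have h2 : (t.*2 <= ((m.-1)./2).*2)%N by rewrite leq_double.
lia.
Qed.

Definition gf (F : finFieldType) (V : vectType F) nu (fam : seq V)
  (phi : {linear 'rV[F]_nu -> V}) (i : 'I_nu) : V :=
  nth 0 fam (find (fun f => <[phi (e_ F i)]>%VS == <[f]>%VS) fam).

Lemma gf_fam (F : finFieldType) (V : vectType F) nu (fam : seq V)
  (phi : {linear 'rV[F]_nu -> V}) :
  parent_function fam phi -> forall i,
  gf fam phi i \in fam /\ <[phi (e_ F i)]>%VS = <[gf fam phi i]>%VS.
Proof.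
move=> Hpar i; have [f fin Hf] := Hpar.1 i.
have Hh : has (fun f => <[phi (e_ F i)]>%VS == <[f]>%VS) fam.
  by apply/hasP; exists f => //; apply/eqP.
split; first by apply: mem_nth; rewrite -has_find.
by apply/eqP; exact: (nth_find 0 Hh).
Qed.

Lemma line_inj (F : finFieldType) (V : vectType F) (fam : seq V) f1 f2 :
  proj_point_family fam -> f1 \in fam -> f2 \in fam -> <[f1]>%VS = <[f2]>%VS -> f1 = f2.
Proof.
move=> Hfam H1 H2 Heq; case: (eqVneq f1 f2) => // Hne.
have := Hfam.2.2 _ _ H1 H2 Hne.
rewrite /free span_cons span_cons span_nil addv0 Heq addvv dim_vline /=.
by case: (f2 != 0).
Qed.

Lemma gf_surj (F : finFieldType) (V : vectType F) nu (fam : seq V)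
  (phi : {linear 'rV[F]_nu -> V}) :
  proj_point_family fam -> parent_function fam phi ->
  forall f, f \in fam -> exists i, gf fam phi i = f.
Proof.
move=> Hfam Hpar f Hf; have [i Hi] := Hpar.2 f Hf.
have [Hg Hl] := gf_fam Hpar i.
by exists i; apply: (line_inj Hfam Hg Hf); rewrite -Hl Hi.
Qed.

Lemma gf_inj (F : finFieldType) (V : vectType F) nu (fam : seq V)
  (phi : {linear 'rV[F]_nu -> V}) :
  proj_point_family fam -> size fam = nu -> parent_function fam phi ->
  injective (gf fam phi).
Proof.
move=> Hfam Hsz Hpar; apply/injectiveP; rewrite /injectiveb /dinjectiveb.
apply: (leq_size_uniq Hfam.1).
  by move=> f /(gf_surj Hfam Hpar) [i <-]; apply: map_f; rewrite mem_enum.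
by rewrite size_map -cardE card_ord Hsz.
Qed.

Lemma R1 (F : finFieldType) (V : vectType F) nu (fam : seq V)
  (phi : {linear 'rV[F]_nu -> V}) :
  proj_point_family fam -> parent_function fam phi ->
  forall I : seq V, {subset I <= fam} -> forall v, v \in <<I>>%VS ->
  exists z, phi z = v /\ supp z \subset [set i | gf fam phi i \in I].
Proof.
move=> Hfam Hpar; elim=> [|f I IH] Hsub v.
  rewrite span_nil memv0 => /eqP->; exists 0; split; first by rewrite linear0.
  by apply/subsetP => i; rewrite !inE mxE eqxx.
rewrite span_cons => /memv_addP [a /vlineP [k ->] [b Hb ->]].
have HsI : {subset I <= fam} by move=> y Hy; apply: Hsub; rewrite in_cons Hy orbT.
have [zb [Hzb Hs]] := IH HsI b Hb.
have [i Hi] := gf_surj Hfam Hpar (Hsub f (mem_head f I)).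
have [_ Hl] := gf_fam Hpar i.
have : gf fam phi i \in <[phi (e_ F i)]>%VS by rewrite Hl memv_line.
move=> /vlineP [c Hc].
exists ((k * c) *: e_ F i + zb); split.
  by rewrite linearD linearZ Hzb -Hi Hc scalerA.
apply/subsetP => j; rewrite !inE !mxE.
case: (eqVneq j i) => [->|Hji]; first by move=> _; rewrite Hi; apply/orP; left.
rewrite /= mulr0 add0r => Hj.
apply/orP; right.
by have := subsetP Hs j; rewrite !inE; apply.
Qed.

Lemma R1' (F : finFieldType) (V : vectType F) nu (fam : seq V)
  (phi : {linear 'rV[F]_nu -> V}) :
  proj_point_family fam -> size fam = nu -> parent_function fam phi ->
  forall I : seq V, {subset I <= fam} -> forall v, v \in <<I>>%VS ->
  exists z, phi z = v /\ (wt z <= size I)%N.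
Proof.
move=> Hfam Hsz Hpar I HI v Hv.
have [z [Hz Hs]] := R1 Hfam Hpar HI Hv.
exists z; split => //.
apply: leq_trans (subset_leq_card Hs) _.
rewrite cardE -(size_map (gf fam phi)).
apply: uniq_leq_size.
  by rewrite (map_inj_uniq (gf_inj Hfam Hsz Hpar)) enum_uniq.
by move=> y /mapP [i]; rewrite mem_enum inE => Hi ->.
Qed.

Lemma R2 (F : finFieldType) (V : vectType F) nu (fam : seq V)
  (phi : {linear 'rV[F]_nu -> V}) :
  proj_point_family fam -> size fam = nu -> parent_function fam phi ->
  forall z, exists I : seq V,
    [/\ {subset I <= fam}, uniq I, size I = wt z & phi z \in <<I>>%VS].
Proof.
move=> Hfam Hsz Hpar z.
exists (map (gf fam phi) (enum (supp z))); split.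
- by move=> y /mapP [i _ ->]; exact: (gf_fam Hpar i).1.
- by rewrite (map_inj_uniq (gf_inj Hfam Hsz Hpar)) enum_uniq.
- by rewrite size_map -cardE.
rewrite phi_sum; apply: memv_suml => i _.
case: (eqVneq (z 0 i) 0) => [->|nz]; first by rewrite scale0r mem0v.
apply: memvZ.
have [_ Hl] := gf_fam Hpar i.
have : phi (e_ F i) \in <[gf fam phi i]>%VS by rewrite -Hl memv_line.
move=> /vlineP [c ->]; apply: memvZ; apply: memv_span.
by apply: map_f; rewrite mem_enum inE.
Qed.

Lemma wtF_char (F : finFieldType) (V : vectType F) nu (fam : seq V)
  (phi : {linear 'rV[F]_nu -> V}) :
  proj_point_family fam -> size fam = nu -> parent_function fam phi ->
  forall v t, wtF_eq fam v t <->
   ((exists z, wt z = t /\ phi z = v) /\ (forall z, phi z = v -> (t <= wt z)%N)).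
Proof.
move=> Hfam Hsz Hpar v t; split.
  case=> [[I [HIs HIu HIt HIv]] Hmin].
  have Hmin' : forall z, phi z = v -> (t <= wt z)%N.
    move=> z Hz; have [I' [H1 H2 H3 H4]] := R2 Hfam Hsz Hpar z.
    by rewrite -H3; apply: Hmin => //; rewrite -Hz.
  split => //.
  have [z [Hz Hw]] := R1' Hfam Hsz Hpar HIs HIv.
  exists z; split => //; apply/eqP; rewrite eqn_leq -HIt Hw /= HIt.
  exact: Hmin'.
case=> [[z [Hwz Hz]] Hmin]; split.
  have [I [H1 H2 H3 H4]] := R2 Hfam Hsz Hpar z.
  by exists I; split => //; rewrite ?H3 // -Hz.
move=> I HIs HIu HIv.
have [z' [Hz' Hw]] := R1' Hfam Hsz Hpar HIs HIv.
exact: leq_trans (Hmin z' Hz') Hw.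
Qed.

Theorem proposition6p1 (F : finFieldType) (V : vectType F) (nu : nat)
  (fam : seq V) (phi : {linear 'rV[F]_nu -> V}) (x : 'rV[F]_nu) (t : nat) :
  proj_point_family fam -> size fam = nu ->
  parent_function fam phi ->
  le_ext t (packing_radius (ker_set phi)) ->
  {in hamming_sphere t x &, injective phi} /\
  (forall u : V, (exists2 y, y \in hamming_sphere t x & phi y = u) <->
                 in_F_sphere fam t (phi x) u).
Proof.
move=> Hfam Hsz Hpar Hle; split.
  move=> y1 y2; rewrite !inE => /eqP H1 /eqP H2 Heq.
  apply/eqP; rewrite -subr_eq0; apply/negPn/negP => Hne.
  have Hk : phi (y1 - y2) = 0 by rewrite linearB Heq subrr.
  have := ker_big Hle Hk Hne.
  have -> : y1 - y2 = (y1 - x) + (x - y2) by rewrite addrA subrK.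
  have := wtD (y1 - x) (x - y2).
  rewrite -(opprB y2 x) wtN -!dH_wt H1 H2.
  lia.
move=> u; split.
  case=> y; rewrite inE => /eqP Hy <-.
  exists (phi (y - x)); last by rewrite linearB addrC subrK.
  apply/(wtF_char Hfam Hsz Hpar); split; first by exists (y - x); rewrite -dH_wt Hy.
  move=> z Hz; rewrite leqNgt; apply/negP => Hlt.
  have Hne : (y - x) - z != 0.
    apply/negP => /eqP /eqP; rewrite subr_eq0 => /eqP E.
    by rewrite -E -dH_wt Hy ltnn in Hlt.
  have Hk : phi ((y - x) - z) = 0 by rewrite linearB Hz subrr.
  have := ker_big Hle Hk Hne.
  have := wtD (y - x) (- z).
  rewrite wtN -(dH_wt x y) Hy.
  rewrite -addnn => A B; have := leq_trans B A; lia.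
case=> v Hv ->.
have [[z [Hwz Hz]] _] := (wtF_char Hfam Hsz Hpar v t).1 Hv.
exists (x + z); last by rewrite linearD Hz.
by rewrite inE dH_wt addrC addKr Hwz.
Qed.
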